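(* Let $t\ge2$ and let $A_1,\dots,A_t$ be jointly distributed random variables on a finite set whose joint distribution is invariant under all permutations of $(A_1,\dots,A_t)$. Let $\{A_1\cdots A_t\}$ denote their joint distribution and $\{A_1\}\cdots\{A_t\}$ the product of their marginal distributions. If $d_H(\{A_1\cdots A_t\},\{A_1\}\cdots\{A_t\})\ge\epsilon$, then $H(A_t\mid A_1,\dots,A_{t-1})\le H(A_1)-2\epsilon^2/t^2$.
   Context: $H$ denotes Shannon entropy with natural logarithm and $H(X\mid Y)=\mathbb{E}_{y}H(X\mid Y=y)$. The Hellinger distance between distributions $p,q$ on a finite set is $d_H(p,q)=\left(1-\sum_i\sqrt{p_iq_i}\right)^{1/2}$. *)

(* Defs.v *)
From mathcomp Require Import all_boot all_fingroup.
From Stdlib Require Import Reals.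

Set Implicit Arguments.
Unset Strict Implicit.
Unset Printing Implicit Defensive.

Definition Rsum (T : finType) (F : T -> R) : R := \big[Rplus/0%R]_(x : T) F x.

Definition is_distr (T : finType) (p : T -> R) : Prop :=
  (forall x, (0 <= p x)%R) /\ Rsum p = 1%R.

Definition xlnx (x : R) : R := if Rlt_dec 0 x then (x * ln x)%R else 0%R.

Definition entropy (T : finType) (p : T -> R) : R := (- Rsum (fun x => xlnx (p x)))%R.

Definition pushforward (T Y : finType) (p : T -> R) (g : T -> Y) (y : Y) : R :=
  \big[Rplus/0%R]_(x : T | g x == y) p x.

Definition cond_entropy (T X Y : finType) (p : T -> R) (f : T -> X) (g : T -> Y) : R :=
  Rsum (fun y : Y =>
    (pushforward p g y *
     entropy (fun a : X =>
       (\big[Rplus/0%R]_(x : T | (f x == a) && (g x == y)) p x) / pushforward p g y))%R).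

Definition marginal (t : nat) (S : finType) (p : {ffun 'I_t -> S} -> R) (i : 'I_t) : S -> R :=
  pushforward p (fun x => x i).

Definition prod_marginals (t : nat) (S : finType) (p : {ffun 'I_t -> S} -> R)
  : {ffun 'I_t -> S} -> R :=
  fun x => \big[Rmult/1%R]_(i : 'I_t) marginal p i (x i).

Definition hellinger (T : finType) (p q : T -> R) : R :=
  sqrt (1 - Rsum (fun x => sqrt (p x * q x)))%R.

Definition exchangeable (t : nat) (S : finType) (p : {ffun 'I_t -> S} -> R) : Prop :=
  forall (s : {perm 'I_t}) (x : {ffun 'I_t -> S}), p [ffun i => x (s i)] = p x.

Lemma lastIdx_lt (t : nat) : (0 < t)%N -> (t.-1 < t)%N.
Proof. by rewrite ltn_predL. Qed.

(* first index (A_1) and last index (A_t) *)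
Definition firstIdx (t : nat) (ht : (0 < t)%N) : 'I_t := Ordinal ht.
Definition lastIdx (t : nat) (ht : (0 < t)%N) : 'I_t := Ordinal (lastIdx_lt ht).

Definition init_coords (t : nat) (S : finType) (x : {ffun 'I_t -> S}) : {ffun 'I_t.-1 -> S} :=
  [ffun i : 'I_t.-1 => x (widen_ord (leq_pred t) i)].

(* Main.v *)
From HB Require Import structures.
Require Import Defs.
From mathcomp Require Import all_boot all_fingroup.
From Stdlib Require Import Reals Lra.

Set Implicit Arguments.
Unset Strict Implicit.
Unset Printing Implicit Defensive.

Lemma Rplus_assoc' : associative Rplus. Proof. move=> *; lra. Qed.
Lemma Rmult_assoc' : associative Rmult. Proof. move=> *; ring. Qed.
HB.instance Definition _ := Monoid.isComLaw.Build R 0%R Rplus Rplus_assoc' Rplus_comm Rplus_0_l.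
HB.instance Definition _ := Monoid.isComLaw.Build R 1%R Rmult Rmult_assoc' Rmult_comm Rmult_1_l.
HB.instance Definition _ := Monoid.isMulLaw.Build R 0%R Rmult Rmult_0_l Rmult_0_r.
HB.instance Definition _ := Monoid.isAddLaw.Build R Rmult Rplus Rmult_plus_distr_r Rmult_plus_distr_l.

Notation "\sum_ ( i <- r | P ) F" := (\big[Rplus/0%R]_(i <- r | P%B) F%R) : R_scope.
Notation "\sum_ ( i <- r ) F" := (\big[Rplus/0%R]_(i <- r) F%R) : R_scope.
Notation "\sum_ ( m <= i < n ) F" := (\big[Rplus/0%R]_(m%nat <= i < n%nat) F%R) : R_scope.
Notation "\sum_ ( i | P ) F" := (\big[Rplus/0%R]_(i | P%B) F%R) : R_scope.
Notation "\sum_ i F" := (\big[Rplus/0%R]_i F%R) : R_scope.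
Notation "\sum_ ( i : t | P ) F" := (\big[Rplus/0%R]_(i : t | P%B) F%R) : R_scope.
Notation "\sum_ ( i : t ) F" := (\big[Rplus/0%R]_(i : t) F%R) : R_scope.
Notation "\sum_ ( i < n ) F" := (\big[Rplus/0%R]_(i < n%nat) F%R) : R_scope.

Local Open Scope R_scope.

Lemma sumR_ge0 (I : finType) (P : pred I) (F : I -> R) :
  (forall i, P i -> 0 <= F i) -> 0 <= \sum_(i | P i) F i.
Proof. move=> H; apply: (big_ind (fun x => 0 <= x)) => //; [lra | move=> *; lra]. Qed.

Lemma sumR_le (I : finType) (P : pred I) (F G : I -> R) :
  (forall i, P i -> F i <= G i) -> \sum_(i | P i) F i <= \sum_(i | P i) G i.
Proof. move=> H; apply: (big_ind2 (fun x y => x <= y)) => //; [lra | move=> *; lra]. Qed.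

Lemma sumR_opp (I : finType) (F : I -> R) :
  \sum_i (- F i) = - \sum_i F i.
Proof.
rewrite (big_morph Ropp (id1 := 0) (op1 := Rplus)) //; [move=> *; lra|lra].
Qed.

Lemma sumR_const_ord n c : \sum_(i < n) c = INR n * c.
Proof.
rewrite big_const_ord; elim: n => [|n IH] /=; first lra.
rewrite IH; destruct n; simpl; lra.
Qed.

Lemma ln_le_sub1 u : 0 < u -> ln u <= u - 1.
Proof. move=> hu; have := exp_ineq1_le (ln u); rewrite exp_ln //; lra. Qed.

Lemma xlnxE x : 0 <= x -> xlnx x = x * ln x.
Proof.
move=> hx; rewrite /xlnx; destruct (Rlt_dec 0 x) as [h|h] => //.
have x0 : x = 0 by lra. subst x; simpl; ring.
Qed.

Lemma sumR_sub (I : finType) (F G : I -> R) :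
  \sum_i (F i - G i) = \sum_i F i - \sum_i G i.
Proof. by rewrite /Rminus big_split /= sumR_opp. Qed.

Lemma ln_div x y : 0 < x -> 0 < y -> ln (x / y) = ln x - ln y.
Proof. move=> hx hy; rewrite /Rdiv ln_mult ?ln_Rinv //; try lra; apply: Rinv_0_lt_compat; lra. Qed.

Lemma Rinv_ge0' x : 0 <= x -> 0 <= / x.
Proof.
move=> hx; case: (Rle_lt_or_eq_dec _ _ hx) => h.
  by apply: Rlt_le; apply: Rinv_0_lt_compat.
by rewrite -h Rinv_0; lra.
Qed.

Lemma Rdiv_self_le1 x : 0 <= x -> x * / x <= 1.
Proof.
move=> hx; case: (Rle_lt_or_eq_dec _ _ hx) => h.
  by rewrite Rinv_r; lra.
by rewrite -h Rinv_0; lra.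
Qed.

Lemma sumR_opp_gen (I : Type) (r : seq I) (P : pred I) (F : I -> R) :
  \sum_(i <- r | P i) (- F i) = - \sum_(i <- r | P i) F i.
Proof.
rewrite (big_morph Ropp (id1 := 0) (op1 := Rplus)) //; [move=> *; lra|lra].
Qed.


Lemma sumR_mull (I : Type) (r : seq I) (P : pred I) (F : I -> R) c :
  \big[Rplus/0]_(i <- r | P i) F i * c = \big[Rplus/0]_(i <- r | P i) (F i * c).
Proof. by rewrite big_distrl. Qed.

Lemma sumR_mulr (I : Type) (r : seq I) (P : pred I) (F : I -> R) c :
  c * \big[Rplus/0]_(i <- r | P i) F i = \big[Rplus/0]_(i <- r | P i) (c * F i).
Proof. by rewrite big_distrr. Qed.

Lemma sum_inj_collapse (I J : finType) (g : I -> J) (ginj : injective g) (f : I -> R)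
  (phi : J -> R -> R) (hphi : forall z, phi z 0 = 0) :
  \sum_(z : J) phi z (\sum_(x | g x == z) f x) = \sum_(x : I) phi (g x) (f x).
Proof.
rewrite [RHS](partition_big g xpredT) //=; apply: eq_bigr => z _.
case: (pickP (fun x => g x == z)) => [x0 /eqP hx0 | hn].
  have hP : forall x, (g x == z) = (x == x0) by move=> x; rewrite -hx0 (inj_eq ginj).
  have hP' : forall x, (true && (g x == z)) = (x == x0) by move=> x; exact: hP.
  by rewrite (big_pred1 x0 hP) (big_pred1 x0 hP') hx0.
rewrite !big1 ?hphi //.
  by move=> x; rewrite /= hn.
by move=> x; rewrite hn.
Qed.

Lemma ln_prod (I : Type) (r : seq I) (F : I -> R) :
  (forall i, 0 < F i) ->
  ln (\big[Rmult/1]_(i <- r) F i) = \big[Rplus/0]_(i <- r) ln (F i).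
Proof.
move=> hF; elim: r => [|a r IH]; first by rewrite !big_nil ln_1.
rewrite !big_cons ln_mult ?IH //.
apply: (big_ind (fun x => 0 < x)) => //; [lra|move=> *; exact: Rmult_lt_0_compat].
Qed.

Lemma kl_point a b : 0 <= a -> 0 <= b -> (0 < a -> 0 < b) ->
  2 * (a - sqrt (a * b)) <= a * ln (a / b).
Proof.
move=> ha hb hab.
case: (Rle_lt_or_eq_dec _ _ ha) => ha'; last first.
  by rewrite -ha' Rmult_0_l sqrt_0; lra.
have hb' := hab ha'.
have sa := sqrt_lt_R0 _ ha'. have sb := sqrt_lt_R0 _ hb'.
have hu : 0 < sqrt b / sqrt a by apply: Rdiv_lt_0_compat.
have := ln_le_sub1 hu.
rewrite ln_div // ln_div //.
have ea : ln a = 2 * ln (sqrt a).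
  by rewrite -{1}(sqrt_sqrt a) ?ln_mult //; lra.
have eb : ln b = 2 * ln (sqrt b).
  by rewrite -{1}(sqrt_sqrt b) ?ln_mult //; lra.
rewrite ea eb sqrt_mult //; try lra.
move=> hl.
have e1 : a = sqrt a * sqrt a by rewrite sqrt_sqrt //; lra.
have : a * (ln (sqrt b) - ln (sqrt a)) <= a * (sqrt b / sqrt a - 1).
  by apply: Rmult_le_compat_l; lra.
have -> : a * (sqrt b / sqrt a - 1) = sqrt a * sqrt b - a.
  clear -e1 sa; move: (sqrt a) (sqrt b) e1 sa => x y e1 hx; subst a; field; lra.
lra.
Qed.

Lemma ln_prod_fin (I : finType) (F : I -> R) :
  (forall i, 0 < F i) ->
  ln (\big[Rmult/1]_(i : I) F i) = \big[Rplus/0]_(i : I) ln (F i).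
Proof. exact: ln_prod. Qed.

Lemma final_arith n c H a : 1 <= n -> 0 <= a -> n * c <= n * H - a -> c <= H - a / n ^ 2.
Proof.
move=> hn ha h.
have hn2 : 0 < n ^ 2 by nra.
apply: (Rmult_le_reg_l (n ^ 2)) => //.
have -> : n ^ 2 * (H - a / n ^ 2) = n ^ 2 * H - a by field; lra.
nra.
Qed.

Lemma telescopeR (f : nat -> R) (n : nat) : \big[Rplus/0]_(0 <= k < n) (f k.+1 - f k) = f n - f 0%nat.
Proof.
elim: n => [|n IH]; first by rewrite big_geq //; ring.
rewrite big_nat_recr //= IH; ring.
Qed.

Section Main.
Variable t : nat.
Variable S : finType.
Local Notation T := {ffun 'I_t -> S}.
Variable p : T -> R.
Hypothesis p_ge0 : forall x, 0 <= p x.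
Hypothesis p_sum : \sum_(x : T) p x = 1.

Definition agree (J : {set 'I_t}) (x y : T) : bool := [forall i in J, x i == y i].
Definition ind (b : bool) : R := if b then 1 else 0.
Definition mJ (J : {set 'I_t}) (x : T) : R := \sum_(y : T) ind (agree J x y) * p y.
Definition CE (J K : {set 'I_t}) : R := - \sum_(x : T) p x * ln (mJ (J :|: K) x / mJ J x).

Lemma agree_refl (J : {set 'I_t}) (x : T) : agree J x x.
Proof. by apply/forallP => i; apply/implyP. Qed.

Lemma agree_sym (J : {set 'I_t}) (x y : T) : agree J x y = agree J y x.
Proof.
by apply/forallP/forallP => H i; apply/implyP => hi; have /implyP/(_ hi)/eqP := H i => ->.
Qed.

Lemma agree_trans (J : {set 'I_t}) (x y z : T) : agree J x y -> agree J y z -> agree J x z.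
Proof.
move=> /forallP H1 /forallP H2; apply/forallP => i; apply/implyP => hi.
by have /implyP/(_ hi)/eqP -> := H1 i; have /implyP/(_ hi) := H2 i.
Qed.

Lemma agree_sub (J K : {set 'I_t}) (x y : T) : J \subset K -> agree K x y -> agree J x y.
Proof.
move=> /subsetP sJK /forallP H; apply/forallP => i; apply/implyP => hi.
by have /implyP/(_ (sJK _ hi)) := H i.
Qed.

Lemma ind_ge0 b : 0 <= ind b. Proof. case: b => /=; lra. Qed.
Lemma ind_le1 b : ind b <= 1. Proof. case: b => /=; lra. Qed.

Lemma mJ_ge_p J x : p x <= mJ J x.
Proof.
rewrite /mJ (bigD1 x) //=.
rewrite {1}/ind agree_refl Rmult_1_l -{1}(Rplus_0_r (p x)).
apply: Rplus_le_compat_l; apply: sumR_ge0 => i _.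
apply: Rmult_le_pos; [apply: ind_ge0|apply: p_ge0].
Qed.

Lemma mJ_ge0 J x : 0 <= mJ J x.
Proof. have := mJ_ge_p J x; have := p_ge0 x; lra. Qed.

Lemma mJ_pos J x : 0 < p x -> 0 < mJ J x.
Proof. have := mJ_ge_p J x; lra. Qed.

Lemma mJ_agree J x y : agree J x y -> mJ J x = mJ J y.
Proof.
move=> hxy; apply: eq_bigr => z _; congr (ind _ * _).
apply/idP/idP => h; [apply: agree_trans h; by rewrite agree_sym|exact: agree_trans h].
Qed.

Lemma mJ0 x : mJ set0 x = 1.
Proof.
rewrite -p_sum; apply: eq_bigr => y _.
have -> : agree set0 x y by apply/forallP => i; rewrite in_set0.
rewrite /ind; ring.
Qed.

Lemma mJT x : mJ setT x = p x.
Proof.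
rewrite /mJ (bigD1 x) //= agree_refl big1 /ind /=; first ring.
move=> y hy; case: ifP => h; last ring.
case/eqP: hy; apply/ffunP => i; symmetry; apply/eqP.
by move/forallP: h => /(_ i) /implyP; apply; rewrite in_setT.
Qed.


Lemma agreeU (J K : {set 'I_t}) (x y : T) :
  agree (J :|: K) x y = agree J x y && agree K x y.
Proof.
apply/idP/andP.
  by move=> h; split; apply: agree_sub h; [apply: subsetUl|apply: subsetUr].
case=> /forallP h1 /forallP h2; apply/forallP => i; apply/implyP; rewrite in_setU.
by case/orP => hi; [move/implyP: (h1 i); apply|move/implyP: (h2 i); apply].
Qed.

Lemma inner_bound (A B L : {set 'I_t}) (hAB : A \subset B) (z w : T) :
  \sum_(x : T) ind (agree (A :|: L) x z) * ind (agree B x w) * (p x / mJ (B :|: L) x)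
  <= ind (agree A z w).
Proof.
case: (pickP (fun x => agree (A :|: L) x z && agree B x w)) => [x0 /andP [h1 h2]|hn]; last first.
  rewrite big1; first exact: ind_ge0.
  move=> x _; have := hn x; rewrite /=; case: (agree (A :|: L) x z); case: (agree B x w) => //= _; rewrite /ind; ring.
have hzw : agree A z w.
  apply: (@agree_trans _ z x0); last exact: agree_sub hAB h2.
  rewrite agree_sym; apply: agree_sub h1; exact: subsetUl.
rewrite hzw /ind /=.
set M := mJ (B :|: L) x0.
have hM : 0 <= M by apply: mJ_ge0.
apply: (@Rle_trans _ (\sum_(x : T) ind (agree (B :|: L) x0 x) * p x * / M)).
  apply: sumR_le => x _.
  have h0 : 0 <= ind (agree (B :|: L) x0 x) * p x * / M.
    apply: Rmult_le_pos; [apply: Rmult_le_pos; [apply: ind_ge0|apply: p_ge0]|exact: Rinv_ge0'].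
  case E1: (agree (A :|: L) x z); case E2: (agree B x w); rewrite /ind /= in h0 *; try lra.
  have hx : agree (B :|: L) x0 x.
    rewrite agreeU; apply/andP; split.
      by apply: (@agree_trans _ x0 w) => //; rewrite agree_sym.
    apply: (@agree_trans _ x0 z); first by apply: agree_sub h1; apply: subsetUr.
    by rewrite agree_sym; apply: agree_sub E1; apply: subsetUr.
  rewrite hx /M (mJ_agree hx) /Rdiv; lra.
rewrite -big_distrl /=.
exact: Rdiv_self_le1.
Qed.

Lemma S_le1 (A B L : {set 'I_t}) (hAB : A \subset B) :
  \sum_(x : T) p x * mJ B x * mJ (A :|: L) x / (mJ (B :|: L) x * mJ A x) <= 1.
Proof.
pose F x z w := ind (agree (A :|: L) x z) * ind (agree B x w) *
                (p z * p w / mJ A z * (p x / mJ (B :|: L) x)).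
have step_a : forall x, p x * mJ B x * mJ (A :|: L) x / (mJ (B :|: L) x * mJ A x)
               = \sum_(z : T) \sum_(w : T) F x z w.
  move=> x.
  have -> : p x * mJ B x * mJ (A :|: L) x / (mJ (B :|: L) x * mJ A x) =
     mJ (A :|: L) x * mJ B x * (p x / (mJ (B :|: L) x * mJ A x)).
    by rewrite /Rdiv; ring.
  rewrite [mJ (A :|: L) x]/mJ big_distrl /= big_distrl /=; apply: eq_bigr => z _.
  rewrite [mJ B x]/mJ big_distrr /= big_distrl /=; apply: eq_bigr => w _.
  rewrite /F; case E1: (agree (A :|: L) x z); last by rewrite /ind; ring.
  have hA : agree A x z by apply: agree_sub E1; apply: subsetUl.
  rewrite (mJ_agree hA) /Rdiv Rinv_mult; ring.
rewrite (eq_bigr _ (fun x _ => step_a x)).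
rewrite exchange_big /=.
apply: (@Rle_trans _ (\sum_(z : T) \sum_(w : T) (p z * p w / mJ A z * ind (agree A z w)))).
  apply: sumR_le => z _; rewrite exchange_big /=; apply: sumR_le => w _.
  have -> : \sum_(x : T) F x z w = p z * p w / mJ A z *
     \sum_(x : T) ind (agree (A :|: L) x z) * ind (agree B x w) * (p x / mJ (B :|: L) x).
    rewrite big_distrr /=; apply: eq_bigr => x _; rewrite /F; ring.
  apply: Rmult_le_compat_l; last exact: inner_bound.
  apply: Rmult_le_pos; [apply: Rmult_le_pos; apply: p_ge0|apply: Rinv_ge0'; apply: mJ_ge0].
rewrite -p_sum; apply: sumR_le => z _.
have -> : \sum_(w : T) (p z * p w / mJ A z * ind (agree A z w)) = p z * (mJ A z * / mJ A z).
  rewrite /mJ big_distrl big_distrr /=; apply: eq_bigr => w _; rewrite /Rdiv; ring.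
have := Rdiv_self_le1 (mJ_ge0 A z); have := p_ge0 z.
move=> h1 h2; rewrite -{2}(Rmult_1_r (p z)); apply: Rmult_le_compat_l => //.
Qed.

Lemma CE_mono (A B L : {set 'I_t}) : A \subset B -> CE B L <= CE A L.
Proof.
move=> hAB.
have := S_le1 L hAB.
suff : \sum_(x : T) (p x - p x * mJ B x * mJ (A :|: L) x / (mJ (B :|: L) x * mJ A x))
   <= \sum_(x : T) (p x * ln (mJ (B :|: L) x / mJ B x) - p x * ln (mJ (A :|: L) x / mJ A x)).
  rewrite !sumR_sub p_sum /CE; move=> h1 h2. set s1 := \big[Rplus/0]_x (p x * ln (mJ (B :|: L) x / mJ B x)) in h1 *. set s2 := \big[Rplus/0]_x (p x * ln (mJ (A :|: L) x / mJ A x)) in h1 *. set s3 := \big[Rplus/0]_x (p x * mJ B x * mJ (A :|: L) x / (mJ (B :|: L) x * mJ A x)) in h1 h2. lra.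
apply: sumR_le => x _.
case: (Rle_lt_or_eq_dec _ _ (p_ge0 x)) => hp; last first.
  by rewrite -hp; lra.
have ha := mJ_pos (A :|: L) hp; have hb := mJ_pos A hp.
have hc := mJ_pos (B :|: L) hp; have hd := mJ_pos B hp.
set a := mJ (A :|: L) x; set b := mJ A x; set c := mJ (B :|: L) x; set d := mJ B x.
have hu : 0 < d * a / (c * b).
  apply: Rmult_lt_0_compat; first by apply: Rmult_lt_0_compat.
  by apply: Rinv_0_lt_compat; apply: Rmult_lt_0_compat.
have := ln_le_sub1 hu.
rewrite ln_div ?ln_mult ?ln_div //; try apply: Rmult_lt_0_compat => //.
move=> hl.
have e : p x - p x * d * a / (c * b) = p x * (1 - d * a / (c * b)) by rewrite /Rdiv; ring.
rewrite e.
have : p x * (1 - d * a / (c * b)) <= p x * (ln c - ln d - (ln a - ln b)).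
  apply: Rmult_le_compat_l; lra.
rewrite !ln_Rinv //; first (move=> h; lra). all: by apply: Rinv_0_lt_compat.
Qed.

Definition act (s : {perm 'I_t}) (x : T) : T := [ffun i => x (s i)].

Lemma act_inj s : injective (act s).
Proof.
move=> x y /ffunP h; apply/ffunP => j; have := h (s^-1 j)%g.
by rewrite !ffunE permKV.
Qed.

Lemma agree_act s J x y : agree J (act s x) (act s y) = agree (s @: J) x y.
Proof.
apply/forallP/forallP => h i; apply/implyP => hi.
  case/imsetP: hi => k hk ->; have /implyP/(_ hk) := h k; by rewrite !ffunE.
rewrite !ffunE; have /implyP := h (s i); apply; exact: imset_f.
Qed.

Hypothesis p_exch : forall (s : {perm 'I_t}) (x : T), p [ffun i => x (s i)] = p x.

Lemma mJ_act s J x : mJ J (act s x) = mJ (s @: J) x.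
Proof.
rewrite /mJ (reindex_inj (@act_inj s)) /=; apply: eq_bigr => y _.
by rewrite agree_act /act p_exch.
Qed.

Lemma CE_act (s : {perm 'I_t}) J K : CE J K = CE (s @: J) (s @: K).
Proof.
rewrite /CE (reindex_inj (@act_inj s)) /=; congr (- _); apply: eq_bigr => x _.
by rewrite !mJ_act imsetU {1}/act p_exch.
Qed.

Definition Ik (k : nat) : {set 'I_t} := [set i : 'I_t | (i < k)%nat].
Definition Kk (k : nat) : {set 'I_t} := [set i : 'I_t | val i == k].

Lemma IkS k : Ik k :|: Kk k = Ik k.+1.
Proof. by apply/setP => i; rewrite !inE ltnS [(i <= k)%nat]leq_eqVlt orbC. Qed.

Lemma Ik0 : Ik 0 = set0.
Proof. by apply/setP => i; rewrite !inE. Qed.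

Lemma Ikt : Ik t = setT.
Proof. by apply/setP => i; rewrite !inE ltn_ord. Qed.

Lemma chain : - \sum_(x : T) xlnx (p x) = \big[Rplus/0]_(0 <= k < t) CE (Ik k) (Kk k).
Proof.
rewrite /CE sumR_opp_gen exchange_big /=; congr (- _); apply: eq_bigr => x _.
rewrite xlnxE //.
case: (Rle_lt_or_eq_dec _ _ (p_ge0 x)) => hp; last first.
  by rewrite -hp big1 ?Rmult_0_l // => k _; rewrite Rmult_0_l.
rewrite -big_distrr /=; congr (_ * _).
rewrite (eq_bigr (fun k => ln (mJ (Ik k.+1) x) - ln (mJ (Ik k) x))); last first.
  by move=> k _; rewrite IkS ln_div //; apply: mJ_pos.
by rewrite telescopeR Ik0 Ikt mJ0 mJT ln_1; ring.
Qed.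

Lemma Kk_set1 (i : 'I_t) : Kk i = [set i].
Proof. by apply/setP => j; rewrite !inE. Qed.

Lemma CE_ge_last k : (k < t)%nat -> CE (Ik t.-1) (Kk t.-1) <= CE (Ik k) (Kk k).
Proof.
move=> hk.
have ht0 : (0 < t)%nat by exact: (leq_ltn_trans (leq0n k) hk).
have hl : (t.-1 < t)%nat by rewrite ltn_predL.
pose kk : 'I_t := Ordinal hk. pose l : 'I_t := Ordinal hl.
pose s := tperm kk l.
rewrite (CE_act s (Ik k)).
have -> : s @: Kk k = Kk t.-1.
  by rewrite (Kk_set1 kk) imset_set1 /s tpermL (Kk_set1 l).
apply: CE_mono; apply/subsetP => j /imsetP [i hi ->].
rewrite !inE in hi *.
have hne : s i != l.
  apply/eqP => e; have : s i = s kk by rewrite /s tpermL.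
  move/perm_inj => eik; move: hi; rewrite eik /= ltnn //.
have : (s i <= t.-1)%nat by rewrite -ltnS prednK ?ltn_ord.
rewrite leq_eqVlt; case/orP => // /eqP e; case/eqP: hne; apply: val_inj.
exact: e.
Qed.

Lemma mJ_Kk (i : 'I_t) x : mJ (Kk i) x = marginal p i (x i).
Proof.
rewrite /marginal /pushforward big_mkcond /=; apply: eq_bigr => y _.
have -> : agree (Kk i) x y = (y i == x i).
  rewrite (Kk_set1 i) eq_sym; apply/forallP/eqP => [/(_ i)|e].
    by rewrite in_set1 eqxx => /eqP.
  by move=> k; apply/implyP; rewrite in_set1 => /eqP ->; rewrite e.
by rewrite /ind; case: (y i == x i); ring.
Qed.

Lemma marg_ge0 (i : 'I_t) a : 0 <= marginal p i a.
Proof. by apply: sumR_ge0 => y _; apply: p_ge0. Qed.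

Lemma CE_empty (i : 'I_t) : CE set0 (Kk i) = entropy (marginal p i).
Proof.
rewrite /CE /entropy /Rsum set0U; congr (- _).
rewrite (eq_bigr (fun x => p x * ln (marginal p i (x i)))); last first.
  by move=> x _; rewrite mJ0 mJ_Kk /Rdiv Rinv_1 Rmult_1_r.
rewrite (partition_big (fun x : T => x i) xpredT) //=; apply: eq_bigr => a _.
rewrite xlnxE ?marg_ge0 //.
transitivity (\big[Rplus/0]_(x : T | x i == a) (p x * ln (marginal p i a))).
  by apply: eq_bigr => x /eqP ->.
  rewrite -sumR_mull; reflexivity.
exact: marg_ge0.
Qed.

Lemma marg_eq (i j : 'I_t) a : marginal p i a = marginal p j a.
Proof.
rewrite /marginal /pushforward (reindex_inj (@act_inj (tperm i j))) /=.
apply: eq_big => [x|x _]; last by rewrite /act p_exch.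
by rewrite /act ffunE tpermL.
Qed.

Lemma entropy_marg_eq (i j : 'I_t) : entropy (marginal p i) = entropy (marginal p j).
Proof. by rewrite /entropy /Rsum; congr (- _); apply: eq_bigr => a _; rewrite (marg_eq i j). Qed.

Lemma init_agree (x z : T) :
  (@init_coords t S z == init_coords x) = agree (Ik t.-1) x z.
Proof.
apply/eqP/forallP => [e i|h].
  apply/implyP; rewrite inE => hi.
  have := congr1 (fun f : {ffun 'I_t.-1 -> S} => f (Ordinal hi)) e; rewrite !ffunE.
  have -> : widen_ord (leq_pred t) (Ordinal hi) = i by apply: val_inj.
  by move=> ->.
apply/ffunP => i; rewrite !ffunE.
have /implyP := h (widen_ord (leq_pred t) i); rewrite inE /= ltn_ord => /(_ isT) /eqP.
by move=> ->.
Qed.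

Lemma init_last_inj (h0 : (0 < t)%nat) :
  injective (fun x : T => (@init_coords t S x, x (lastIdx h0))).
Proof.
move=> x y [e1 e2]; apply/ffunP => i.
case: (ltnP i t.-1) => hi.
  have := congr1 (fun f : {ffun 'I_t.-1 -> S} => f (Ordinal hi)) e1; rewrite !ffunE.
  by have -> : widen_ord (leq_pred t) (Ordinal hi) = i by apply: val_inj.
have -> : i = lastIdx h0.
  apply: val_inj => /=; apply/eqP; rewrite eqn_leq hi andbT.
  by rewrite -ltnS prednK.
exact: e2.
Qed.

Lemma cond_CE (h0 : (0 < t)%nat) :
  cond_entropy p (fun x => x (lastIdx h0)) (@init_coords t S) = CE (Ik t.-1) (Kk t.-1).
Proof.
rewrite /cond_entropy /Rsum.
pose P y := pushforward p (@init_coords t S) y.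
pose phi (z : {ffun 'I_t.-1 -> S} * S) u := - P z.1 * xlnx (u / P z.1).
transitivity (\sum_(z : {ffun 'I_t.-1 -> S} * S)
   phi z (\sum_(x | (fun x : T => (@init_coords t S x, x (lastIdx h0))) x == z) p x)).
  pose G y a := phi (y, a) (\big[Rplus/0]_(x | (fun x : T => (@init_coords t S x, x (lastIdx h0))) x == (y, a)) p x).
  rewrite [RHS](eq_bigr (fun z => G z.1 z.2)); last by case.
  rewrite -(pair_bigA _ G) /=.
  apply: eq_bigr => y _; rewrite /entropy /Rsum -sumR_opp_gen sumR_mulr.
  apply: eq_bigr => a _; rewrite /phi /=.
  have -> : \big[Rplus/0]_(x : T | (x (lastIdx h0) == a) && (init_coords x == y)) p x =
            \big[Rplus/0]_(x : T | (init_coords x, x (lastIdx h0)) == (y, a)) p x.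
    by apply: eq_bigl => x; rewrite xpair_eqE andbC.
  rewrite /G /phi /P /= -Ropp_mult_distr_l -Ropp_mult_distr_r; reflexivity.
rewrite sum_inj_collapse; last 2 first.
- exact: init_last_inj.
- by move=> z; rewrite /phi /Rdiv Rmult_0_l /xlnx; destruct (Rlt_dec 0 0) as [h|h]; [lra|simpl; ring].
rewrite /CE IkS prednK // Ikt -sumR_opp_gen; apply: eq_bigr => x _.
rewrite /phi /= mJT.
have eP : P (init_coords x) = mJ (Ik t.-1) x.
  rewrite /P /pushforward /mJ big_mkcond /=; apply: eq_bigr => z _.
  by rewrite init_agree /ind; case: agree; ring.
rewrite eP; set M := mJ (Ik t.-1) x.
case: (Rle_lt_or_eq_dec _ _ (p_ge0 x)) => hp; last first.
  by rewrite -hp /Rdiv !Rmult_0_l /xlnx; destruct (Rlt_dec 0 0) as [h|h]; [lra|simpl; ring].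
have hM : 0 < M by apply: mJ_pos.
rewrite xlnxE; last by apply: Rlt_le; apply: Rdiv_lt_0_compat.
field; lra.
Qed.

Lemma sum_p_ln_marg (i : 'I_t) :
  \sum_(x : T) p x * ln (marginal p i (x i)) = - entropy (marginal p i).
Proof.
rewrite -CE_empty /CE set0U Ropp_involutive; apply: eq_bigr => x _.
by rewrite mJ0 mJ_Kk /Rdiv Rinv_1 Rmult_1_r.
Qed.

Lemma q_pos x : 0 < p x -> 0 < prod_marginals p x.
Proof.
move=> hp; rewrite /prod_marginals.
apply: (big_ind (fun x => 0 < x)) => //; [lra|move=> *; exact: Rmult_lt_0_compat|].
move=> i _; rewrite -mJ_Kk; exact: mJ_pos.
Qed.

Lemma q_ge0 x : 0 <= prod_marginals p x.
Proof.
rewrite /prod_marginals.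
apply: (big_ind (fun x => 0 <= x)) => //; [lra|move=> *; exact: Rmult_le_pos|].
move=> i _; exact: marg_ge0.
Qed.

Lemma KL_expand (i0 : 'I_t) :
  \sum_(x : T) p x * ln (p x / prod_marginals p x)
  = INR t * entropy (marginal p i0) - (- \sum_(x : T) xlnx (p x)).
Proof.
rewrite (eq_bigr (fun x => xlnx (p x) - \sum_(i < t) p x * ln (marginal p i (x i)))); last first.
  move=> x _; rewrite xlnxE //.
  case: (Rle_lt_or_eq_dec _ _ (p_ge0 x)) => hp; last first.
    by rewrite -hp big1; [ring|move=> i _; ring].
  have e : ln (prod_marginals p x) = \sum_(i < t) ln (marginal p i (x i)).
    apply: ln_prod_fin => i; rewrite -mJ_Kk; exact: mJ_pos.
  rewrite ln_div //; last exact: q_pos.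
  by rewrite e -sumR_mulr Rmult_minus_distr_l.
rewrite sumR_sub exchange_big /=.
have -> : \sum_(i < t) \sum_(x : T) p x * ln (marginal p i (x i)) = \sum_(i < t) (- entropy (marginal p i0)).
  by apply: eq_bigr => i _; rewrite -(entropy_marg_eq i i0) -sum_p_ln_marg.
rewrite sumR_const_ord; ring.
Qed.

Lemma KL_bound :
  2 * (1 - Rsum (fun x => sqrt (p x * prod_marginals p x)))
  <= \sum_(x : T) p x * ln (p x / prod_marginals p x).
Proof.
have -> : 2 * (1 - Rsum (fun x => sqrt (p x * prod_marginals p x))) =
   \sum_(x : T) 2 * (p x - sqrt (p x * prod_marginals p x)).
  by rewrite -sumR_mulr sumR_sub p_sum.
apply: sumR_le => x _; apply: kl_point; [exact: p_ge0|exact: q_ge0|exact: q_pos].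
Qed.

Lemma Hp_ge : INR t * CE (Ik t.-1) (Kk t.-1) <= - \sum_(x : T) xlnx (p x).
Proof.
rewrite chain big_mkord -sumR_const_ord; apply: sumR_le => k _.
apply: CE_ge_last; exact: ltn_ord.
Qed.

Lemma Hp_le (i0 : 'I_t) : - \sum_(x : T) xlnx (p x) <= INR t * entropy (marginal p i0).
Proof.
rewrite chain big_mkord -sumR_const_ord; apply: sumR_le => k _.
rewrite -(entropy_marg_eq k i0) -CE_empty; apply: CE_mono; exact: sub0set.
Qed.

End Main.

Local Close Scope R_scope.
Unset Implicit Arguments.

Theorem lemma3p3 (t : nat) (ht : (2 <= t)%N) (S : finType)
  (p : {ffun 'I_t -> S} -> R) (eps : R) :
  is_distr p ->
  exchangeable p ->
  (0 <= eps)%R ->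
  (hellinger p (prod_marginals p) >= eps)%R ->
  (cond_entropy p (fun x => x (lastIdx (ltnW ht))) (@init_coords t S)
     <= entropy (marginal p (firstIdx (ltnW ht))) - 2 * eps ^ 2 / (INR t) ^ 2)%R.
Proof.
move=> [p0 p1] pex he0 hH.
rewrite (cond_CE p0 (ltnW ht)).
have hge := Hp_ge p0 p1 pex.
have hle := Hp_le p0 p1 pex (firstIdx (ltnW ht)).
have hK := KL_expand p0 p1 pex (firstIdx (ltnW ht)).
have hB := KL_bound p0 p1.
move: hge hle hK hB hH.
set c := CE _ _ _.
set H1 := entropy _.
set Hp := Ropp _.
set KL := bigop.bigop.body _ _ _.
set BC := Rsum _.
rewrite /hellinger -/BC.
move=> hge hle hK hB hH.
have hn : (1 <= INR t)%R.
  have := le_INR 1 t; rewrite /= => h; apply: h; apply/leP; exact: ltnW.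
have key : (INR t * c <= INR t * H1 - 2 * eps ^ 2)%R.
  case: (Rle_dec 0 (1 - BC)) => hx.
    have : (eps * eps <= sqrt (1 - BC) * sqrt (1 - BC))%R.
      apply: Rmult_le_compat => //; lra.
    rewrite sqrt_sqrt // => h2.
    have -> : (eps ^ 2 = eps * eps)%R by ring.
    lra.
  have := sqrt_neg_0 (1 - BC) (ltac:(lra)); rewrite /Rge in hH => h.
  have e0 : eps = 0%R by lra.
  rewrite e0; have -> : (0 ^ 2 = 0)%R by ring.
  lra.
apply: final_arith => //.
have : (0 <= eps ^ 2)%R by apply: pow2_ge_0.
lra.
Qed.
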